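(* Every jewel and every pyramid contains an induced subgraph isomorphic to $C_5$, to the bull, or to an anchor.
   Context: All graphs are finite and simple. The bull is the graph consisting of a triangle with two disjoint pendant edges. An anchor is a six-vertex graph consisting of a 4-vertex induced path $P$, a vertex $c$ adjacent to all vertices of $P$, and a vertex $a$ adjacent to no vertex of $P$ (with $a,c$ either adjacent or not). A path $p_1-\dots-p_k$ is a sequence of distinct vertices with $p_i$ adjacent to $p_j$ iff $|i-j|=1$; its ends are $p_1,p_k$. A pyramid is a graph formed by the union of a triangle $\{b_1,b_2,b_3\}$, a fourth vertex $a$, and three paths $P_1,P_2,P_3$ such that: for $i=1,2,3$, $P_i$ has ends $a$ and $b_i$; for $1\le i<j\le3$, $a$ is the only vertex in both $P_i$ and $P_j$, and $b_ib_j$ is the only edge between $V(P_i)\setminus\{a\}$ and $V(P_j)\setminus\{a\}$; and $a$ is adjacent to at most one of $b_1,b_2,b_3$. A jewel is a graph $H$ with vertex set $\{v_1,\dots,v_5\}\cup F$ such that $H[F]$ is connected, $v_1v_2,v_2v_3,v_3v_4,v_4v_5,v_5v_1$ are edges, $v_1v_3,v_2v_4,v_1v_4$ are non-edges, $v_2,v_3,v_5$ have no neighbours in $F$, and each of $v_1,v_4$ has a neighbour in $F$. *)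

(* Defs.v *)
(* Simple finite graphs: T : finType with a symmetric,
   irreflexive adjacency relation e : rel T. *)
From mathcomp Require Import all_boot.
Set Implicit Arguments. Unset Strict Implicit. Unset Printing Implicit Defensive.

Section Graphs.
Variables (T : finType) (e : rel T).

Definition has_induced (k : nat) (adjH : rel 'I_k) : Prop :=
  exists f : 'I_k -> T, injective f /\ forall i j, e (f i) (f j) = adjH i j.

Definition induced_connected (F : {set T}) : Prop :=
  F != set0 /\
  forall x y, x \in F -> y \in F ->
    connect [rel u v | [&& e u v, u \in F & v \in F]] x y.

(* Induced path p_1 - ... - p_k as a sequence of distinct vertices with
   p_i adjacent to p_j iff |i - j| = 1 (the default x0 of nth is irrelevant). *)
Definition induced_path (s : seq T) : Prop :=
  uniq s /\
  forall (x0 : T) i j, i < size s -> j < size s ->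
    e (nth x0 s i) (nth x0 s j) = (i == j.+1) || (j == i.+1).

Definition is_jewel : Prop :=
  exists (v1 v2 v3 v4 v5 : T) (F : {set T}),
    [/\ uniq [:: v1; v2; v3; v4; v5],
        (forall x, (x \in F) || (x \in [:: v1; v2; v3; v4; v5])),
        (forall x, x \in F -> x \notin [:: v1; v2; v3; v4; v5]) &
        induced_connected F] /\
    [/\ [&& e v1 v2, e v2 v3, e v3 v4, e v4 v5 & e v5 v1],
        [&& ~~ e v1 v3, ~~ e v2 v4 & ~~ e v1 v4],
        (forall x, x \in F -> [&& ~~ e v2 x, ~~ e v3 x & ~~ e v5 x]),
        (exists2 x, x \in F & e v1 x) &
        (exists2 x, x \in F & e v4 x)].

Definition is_pyramid : Prop :=
  exists (a b1 b2 b3 : T) (P1 P2 P3 : seq T),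
    let P := [:: P1; P2; P3] in
    let b := [:: b1; b2; b3] in
    [/\ [&& e b1 b2, e b2 b3 & e b1 b3],
        (forall i, i < 3 -> [/\ induced_path (nth [::] P i),
                                 nth [::] P i != [::],
                                 head b1 (nth [::] P i) = a &
                                 last a (nth [::] P i) = nth a b i]),
        (forall x, has (fun s => x \in s) P) &
        count (e a) b <= 1] /\
    (forall i j x, i < 3 -> j < 3 -> i != j ->
          x \in nth [::] P i -> x \in nth [::] P j -> x = a) /\
    (forall i j x y, i < 3 -> j < 3 -> i != j ->
          x \in nth [::] P i -> y \in nth [::] P j -> x != a -> y != a ->
          e x y -> (x == nth a b i) && (y == nth a b j)).

End Graphs.

Definition adj_of {k : nat} (E : seq (nat * nat)) : rel 'I_k :=
  fun i j => ((nat_of_ord i, nat_of_ord j) \in E) || ((nat_of_ord j, nat_of_ord i) \in E).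

Definition C5 : rel 'I_5 := adj_of [:: (0,1); (1,2); (2,3); (3,4); (4,0)].

Definition bull : rel 'I_5 := adj_of [:: (0,1); (1,2); (0,2); (0,3); (1,4)].

(* anchor: induced path 0-1-2-3, c = 4 adjacent to 0,1,2,3, a = 5 adjacent to
   none of 0..3; a and c adjacent iff ac = true. *)
Definition anchor (ac : bool) : rel 'I_6 :=
  adj_of ([:: (0,1); (1,2); (2,3); (4,0); (4,1); (4,2); (4,3)]
             ++ (if ac then [:: (4,5)] else [::])).

(* Main.v *)
Require Import Defs.
From mathcomp Require Import all_boot.
Set Implicit Arguments. Unset Strict Implicit. Unset Printing Implicit Defensive.

Definition adjN (E : seq (nat * nat)) (i j : nat) := ((i, j) \in E) || ((j, i) \in E).

Definition twinfree (k : nat) (E : seq (nat * nat)) :=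
  all (fun i => all (fun j => [|| i == j, adjN E i j |
      has (fun l => adjN E i l != adjN E j l) (iota 0 k)]) (iota 0 k)) (iota 0 k).

Lemma has_induced_seq (T : finType) (e : rel T) (e_irr : irreflexive e)
   k (E : seq (nat * nat)) (s : seq T) (x0 : T) :
  (forall i j : 'I_k, e (nth x0 s i) (nth x0 s j) = adj_of E i j) ->
  twinfree k E -> has_induced e (@adj_of k E).
Proof.
move=> Hadj Htw; exists (fun i : 'I_k => nth x0 s i); split => //.
move=> i j Hij; apply/eqP; apply/negPn/negP => nij.
have /allP /(_ i) := Htw; rewrite mem_iota /= add0n ltn_ord => /(_ isT).
move=> /allP /(_ j); rewrite mem_iota /= add0n ltn_ord => /(_ isT).
have -> : (nat_of_ord i == nat_of_ord j) = false by apply/negbTE.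
have -> : adjN E i j = false.
  by have := Hadj i j; rewrite /adj_of -/(adjN E i j) Hij e_irr.
move=> /hasP [l]; rewrite mem_iota add0n => /= ltl.
have := Hadj i (Ordinal ltl); have := Hadj j (Ordinal ltl).
by rewrite /adj_of /= -!/(adjN _ _ _) Hij => -> ->; rewrite eqxx.
Qed.


Ltac adj_cases e_sym_ e_irr_ :=
  move=> [[|[|[|[|[|[|i]]]]]] Hi] [[|[|[|[|[|[|j]]]]]] Hj] //=;
  rewrite /adj_of /=;
  first [ by rewrite e_irr_ | done | by rewrite e_sym_ | by apply/negbTE
        | by rewrite e_sym_; apply/negbTE ].

Lemma c5_of (T : finType) (e : rel T) (e_sym_ : symmetric e) (e_irr_ : irreflexive e) v1 v2 v3 v4 v5 :
  e v1 v2 -> e v2 v3 -> e v3 v4 -> e v4 v5 -> e v5 v1 ->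
  ~~ e v1 v3 -> ~~ e v1 v4 -> ~~ e v2 v4 -> ~~ e v2 v5 -> ~~ e v3 v5 -> has_induced e C5.
Proof.
move=> *.
apply: (has_induced_seq e_irr_ (s := [:: v1; v2; v3; v4; v5]) (x0 := v1)); last by [].
adj_cases e_sym_ e_irr_.
Qed.

Lemma bull_of (T : finType) (e : rel T) (e_sym_ : symmetric e) (e_irr_ : irreflexive e) v0 v1 v2 v3 v4 :
  e v0 v1 -> e v1 v2 -> e v0 v2 -> e v0 v3 -> e v1 v4 ->
  ~~ e v0 v4 -> ~~ e v1 v3 -> ~~ e v2 v3 -> ~~ e v2 v4 -> ~~ e v3 v4 -> has_induced e bull.
Proof.
move=> *.
apply: (has_induced_seq e_irr_ (s := [:: v0; v1; v2; v3; v4]) (x0 := v1)); last by [].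
adj_cases e_sym_ e_irr_.
Qed.

Lemma jewel_case (T : finType) (e : rel T) (e_sym : symmetric e) (e_irr : irreflexive e) :
  is_jewel e -> has_induced e C5 \/ has_induced e bull.
Proof.
move=> [v1 [v2 [v3 [v4 [v5 [F [[_ _ _ _] [
   /and5P [e12 e23 e34 e45 e51] /and3P [n13 n24 n14] HF [x1 x1F e1x1] [x4 x4F e4x4]]]]]]]]].
have [n2x1 n3x1 n5x1] := and3P (HF _ x1F).
have [n2x4 n3x4 n5x4] := and3P (HF _ x4F).
case E1: (e x1 v4).
  left; apply: (c5_of e_sym e_irr (v1 := v1) (v2 := v2) (v3 := v3) (v4 := v4) (v5 := x1)); first [done | by rewrite e_sym ?E1].
case E4: (e v1 x4).
  left; apply: (c5_of e_sym e_irr (v1 := v1) (v2 := v2) (v3 := v3) (v4 := v4) (v5 := x4)); first [done | by rewrite e_sym ?E4].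
case E25: (e v2 v5).
  right; apply: (bull_of e_sym e_irr (v0 := v1) (v1 := v5) (v2 := v2) (v3 := x1) (v4 := v4)); first [done | by rewrite ?E1 ?E4 ?E25 | by rewrite e_sym ?E1 ?E4 ?E25 ?E35].
case E35: (e v3 v5).
  right; apply: (bull_of e_sym e_irr (v0 := v4) (v1 := v5) (v2 := v3) (v3 := x4) (v4 := v1)); first [done | by rewrite ?E1 ?E4 ?E35 | by rewrite e_sym ?E1 ?E4 ?E25 ?E35].
left; apply: (c5_of e_sym e_irr (v1 := v1) (v2 := v2) (v3 := v3) (v4 := v4) (v5 := v5));  first [done | by rewrite ?E25 ?E35].
Qed.

Lemma last_in (T : eqType) (P : seq T) a : P != [::] -> last a P \in P.
Proof. by case: P => //= p q _; exact: mem_last. Qed.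

Lemma pred_vertex (T : finType) (e : rel T) (e_sym : symmetric e) P d a b :
  induced_path e P -> P != [::] -> head d P = a -> last a P = b -> ~~ e a b -> a != b ->
  exists b', [/\ b' \in P, b' != a, b' != b & e b' b].
Proof.
move=> [U Hp] nP hP lP nab ab.
have s3 : 2 < size P.
  case: P U Hp nP hP lP => [|p [|q [|r s]]] //= U Hp _ hP lP.
  - by move: ab; rewrite -hP -lP eqxx.
  - have := Hp p 0 1 erefl erefl; rewrite /= hP lP => h.
    by move: nab; rewrite h.
have h0 : nth a P 0 = a by case: P nP hP {U Hp lP s3}.
have hl : nth a P (size P).-1 = b by rewrite nth_last.
exists (nth a P (size P).-2); split.
- by apply: mem_nth; case: (size P) s3 => [|[|[|n]]].
- rewrite -{2}h0 nth_uniq //; case: (size P) s3 => [|[|[|n]]] //;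
  by case: (size P) s3 => [|[|[|n]]].
- rewrite -hl nth_uniq //; case: (size P) s3 => [|[|[|n]]] //= _.
  + by rewrite eqSS; elim: n.
- rewrite -hl Hp; case: (size P) s3 => [|[|[|n]]] //= _.
  + by rewrite eqxx orbT.
Qed.

Lemma pyr_bull (T : finType) (e : rel T) (e_sym : symmetric e) (e_irr : irreflexive e)
    a bi bj bk (Pi Pj Pk : seq T) di dj :
  e bi bj -> e bj bk -> e bi bk -> ~~ e a bi -> ~~ e a bj ->
  induced_path e Pi -> Pi != [::] -> head di Pi = a -> last a Pi = bi ->
  induced_path e Pj -> Pj != [::] -> head dj Pj = a -> last a Pj = bj ->
  bk \in Pk ->
  (forall x y, x \in Pi -> y \in Pj -> x != a -> y != a -> e x y -> (x == bi) && (y == bj)) ->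
  (forall x y, x \in Pj -> y \in Pi -> x != a -> y != a -> e x y -> (x == bj) && (y == bi)) ->
  (forall x y, x \in Pi -> y \in Pk -> x != a -> y != a -> e x y -> (x == bi) && (y == bk)) ->
  (forall x y, x \in Pj -> y \in Pk -> x != a -> y != a -> e x y -> (x == bj) && (y == bk)) ->
  has_induced e bull.
Proof.
move=> eij ejk eik nai naj ipi nPi hPi lPi ipj nPj hPj lPj bkin Cij Cji Cik Cjk.
have bia : bi != a by apply/eqP => h; move: naj; rewrite -h eij.
have bja : bj != a by apply/eqP => h; move: nai; rewrite -h e_sym eij.
have bka : bk != a by apply/eqP => h; move: nai; rewrite -h e_sym eik.
have abi : a != bi by rewrite eq_sym.
have abj : a != bj by rewrite eq_sym.
have [bi' [bi'in bi'a bi'bi ebi']] :=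
  pred_vertex e_sym ipi nPi hPi lPi nai abi.
have [bj' [bj'in bj'a bj'bj ebj']] :=
  pred_vertex e_sym ipj nPj hPj lPj naj abj.
have biin : bi \in Pi by rewrite -lPi last_in.
have bjin : bj \in Pj by rewrite -lPj last_in.
have n1 : ~~ e bi' bj.
  by apply/negP => E; move: (Cij _ _ bi'in bjin bi'a bja E); rewrite (negbTE bi'bi).
have n2 : ~~ e bi' bk.
  by apply/negP => E; move: (Cik _ _ bi'in bkin bi'a bka E); rewrite (negbTE bi'bi).
have n3 : ~~ e bi' bj'.
  by apply/negP => E; move: (Cij _ _ bi'in bj'in bi'a bj'a E); rewrite (negbTE bi'bi).
have n4 : ~~ e bj' bi.
  by apply/negP => E; move: (Cji _ _ bj'in biin bj'a bia E); rewrite (negbTE bj'bj).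
have n5 : ~~ e bj' bk.
  by apply/negP => E; move: (Cjk _ _ bj'in bkin bj'a bka E); rewrite (negbTE bj'bj).
apply: (bull_of e_sym e_irr (v0 := bi) (v1 := bj) (v2 := bk) (v3 := bi') (v4 := bj'));
  first [done | by rewrite e_sym].
Qed.

Lemma pyramid_case (T : finType) (e : rel T) (e_sym : symmetric e) (e_irr : irreflexive e) :
  is_pyramid e -> has_induced e bull.
Proof.
move=> [a [b1 [b2 [b3 [P1 [P2 [P3 /= [[/and3P [e12 e23 e13] Hp _ cnt] [_ Hc]]]]]]]]].
have [ip1 n1 h1 l1] := Hp 0 erefl.
have [ip2 n2 h2 l2] := Hp 1 erefl.
have [ip3 n3 h3 l3] := Hp 2 erefl.
simpl in *.
have b1in : b1 \in P1 by rewrite -l1 last_in.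
have b2in : b2 \in P2 by rewrite -l2 last_in.
have b3in : b3 \in P3 by rewrite -l3 last_in.
have C12 := fun x y => Hc 0 1 x y erefl erefl erefl.
have C21 := fun x y => Hc 1 0 x y erefl erefl erefl.
have C13 := fun x y => Hc 0 2 x y erefl erefl erefl.
have C31 := fun x y => Hc 2 0 x y erefl erefl erefl.
have C23 := fun x y => Hc 1 2 x y erefl erefl erefl.
have C32 := fun x y => Hc 2 1 x y erefl erefl erefl.
simpl in C12, C21, C13, C31, C23, C32.
move: cnt.
case E1: (e a b1); case E2: (e a b2); case E3: (e a b3) => //= _.
- apply: (@pyr_bull T e e_sym e_irr a b2 b3 b1 P2 P3 P1 b1 b1 _ _ _ _ _ ip2 n2 h2 l2 ip3 n3 h3 l3 b1in C23 C32 C21 C31);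
  rewrite ?E1 ?E2 ?E3 // e_sym //.
- apply: (@pyr_bull T e e_sym e_irr a b1 b3 b2 P1 P3 P2 b1 b1 _ _ _ _ _ ip1 n1 h1 l1 ip3 n3 h3 l3 b2in C13 C31 C12 C32);
  rewrite ?E1 ?E2 ?E3 // e_sym //.
- apply: (@pyr_bull T e e_sym e_irr a b1 b2 b3 P1 P2 P3 b1 b1 _ _ _ _ _ ip1 n1 h1 l1 ip2 n2 h2 l2 b3in C12 C21 C13 C23);
  rewrite ?E1 ?E2 ?E3 // e_sym //.
- apply: (@pyr_bull T e e_sym e_irr a b1 b2 b3 P1 P2 P3 b1 b1 _ _ _ _ _ ip1 n1 h1 l1 ip2 n2 h2 l2 b3in C12 C21 C13 C23);
  rewrite ?E1 ?E2 ?E3 // e_sym //.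
Qed.

Theorem theorem1p6 (T : finType) (e : rel T)
    (e_sym : symmetric e) (e_irr : irreflexive e) :
  is_jewel e \/ is_pyramid e ->
  has_induced e C5 \/ has_induced e bull \/ exists ac, has_induced e (anchor ac).
Proof.
case=> [/(jewel_case e_sym e_irr) [h|h] | /(pyramid_case e_sym e_irr) h]; by [left | right; left].
Qed.
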